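(* Let $\mathcal{H}_n$ be an $n$-dimensional Hilbert space and let $F=\{f_i\}_{i=1}^N$ be a uniform normalized tight frame (UNTF) for $\mathcal{H}_n$. For $p>2$, the canonical dual $\{S_F^{-1}f_i\}_{i=1}^N$ of $F$ is the unique $1$-erasure Frobenius-optimal dual frame of $F$, i.e. $\zeta_{\mathfrak{F}}^{(1),p}(F)=\{S_F^{-1}F\}$. Consequently, it is also the unique $m$-erasure Frobenius-optimal dual frame of $F$, i.e. $\zeta_{\mathfrak{F}}^{(m),p}(F)=\{S_F^{-1}F\}$, for all $m\ge 1$.
   Context: A finite sequence $F=\{f_i\}_{i=1}^N$ in $\mathcal{H}_n$ is a frame if there are $0<A'\le B'$ with $A'\|f\|^2\le\sum_i|\langle f,f_i\rangle|^2\le B'\|f\|^2$ for all $f$; it is tight if one can take $A'=B'$ and Parseval if $A'=B'=1$. A uniform normalized tight frame (UNTF) is a Parseval frame all of whose vectors have the same norm (so $\|f_i\|^2=n/N$ and $S_F=I$). The analysis operator is $T_F:\mathcal{H}_n\to\mathbb{C}^N$, $T_Ff=(\langle f,f_i\rangle)_{i=1}^N$, with adjoint $T_F^*(c_i)=\sum_i c_if_i$; the frame operator is $S_F=T_F^*T_F$, and $S_F^{-1}F=\{S_F^{-1}f_i\}$ is the canonical dual. $G=\{g_i\}_{i=1}^N$ is a dual of $F$ if $T_G^*T_F=I$, i.e. $f=\sum_i\langle f,f_i\rangle g_i$ for all $f$. For $1\le m\le N$ let $\mathcal{D}^{(m)}$ be the set of $N\times N$ diagonal matrices with exactly $m$ diagonal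 entries equal to $1$ and the others $0$. For $p>1$ and a dual $G$ define \[\mathrm{AE}_{\mathfrak{F}}^{(m),p}(F,G)=\Big\{\tbinom{N}{m}^{-1}\sum_{D\in\mathcal{D}^{(m)}}\|T_G^*DT_F\|_{\mathfrak{F}}^p\Big\}^{1/p},\] where $\|\cdot\|_{\mathfrak{F}}$ is the Frobenius (Hilbert–Schmidt) norm; for $m=1$ this equals $\{\frac1N\sum_i(\|f_i\|\|g_i\|)^p\}^{1/p}$. Set $\mathrm{AE}_{\mathfrak{F}}^{(1),p}(F)=\inf\{\mathrm{AE}_{\mathfrak{F}}^{(1),p}(F,G): G\text{ dual of }F\}$ and $\zeta_{\mathfrak{F}}^{(1),p}(F)$ the set of duals attaining it ($1$-erasure Frobenius-optimal duals). Recursively, for $k>1$, $\mathrm{AE}_{\mathfrak{F}}^{(k),p}(F)=\inf\{\mathrm{AE}_{\mathfrak{F}}^{(k),p}(F,G):G\in\zeta_{\mathfrak{F}}^{(k-1),p}(F)\}$ and $\zeta_{\mathfrak{F}}^{(k),p}(F)=\{G\in\zeta_{\mathfrak{F}}^{(k-1),p}(F):\mathrm{AE}_{\mathfrak{F}}^{(k),p}(F,G)=\mathrm{AE}_{\mathfrak{F}}^{(k),p}(F)\}$ ($k$-erasure Frobenius-optimal duals). *)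

(* Defs.v *)
From HB Require Import structures.
From mathcomp Require Import all_boot all_order all_algebra.
From mathcomp Require Import classical_sets boolp reals exp.
From mathcomp Require Import complex.
Set Implicit Arguments. Unset Strict Implicit. Unset Printing Implicit Defensive.
Import Order.TTheory GRing.Theory Num.Theory.
Local Open Scope ring_scope.
Local Open Scope classical_set_scope.

Section Frames.
Variables (R : realType) (n N : nat).
Local Notation C := (R[i]).
(* H_n = C^n, vectors are row vectors; a family of N vectors is indexed by 'I_N *)
Definition vec := 'rV[C]_n.

Definition cabs (z : C) : R := Num.sqrt (complex.Re z ^+ 2 + complex.Im z ^+ 2).
Definition vfam := 'I_N -> vec.

Definition inner (f g : vec) : C := \sum_(k < n) f ord0 k * conjc (g ord0 k).
Definition normsq (f : vec) : R := \sum_(k < n) (cabs (f ord0 k)) ^+ 2.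
Definition vnorm (f : vec) : R := Num.sqrt (normsq f).

Definition is_frame (F : vfam) : Prop :=
  exists A B : R, [/\ 0 < A, A <= B &
    forall f : vec,
      A * normsq f <= \sum_(i < N) (cabs (inner f (F i))) ^+ 2 /\
      \sum_(i < N) (cabs (inner f (F i))) ^+ 2 <= B * normsq f].

Definition is_parseval (F : vfam) : Prop :=
  is_frame F /\
  forall f : vec, \sum_(i < N) (cabs (inner f (F i))) ^+ 2 = normsq f.

Definition is_UNTF (F : vfam) : Prop :=
  is_parseval F /\ forall i j : 'I_N, vnorm (F i) = vnorm (F j).

Definition analysis (F : vfam) (f : vec) : 'rV[C]_N :=
  \row_(i < N) inner f (F i).
Definition synthesis (G : vfam) (c : 'rV[C]_N) : vec :=
  \sum_(i < N) c ord0 i *: G i.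

Definition is_dual (F G : vfam) : Prop :=
  forall f : vec, synthesis G (analysis F f) = f.

(* The n x n matrix of an operator on C^n in the row-vector convention
   (f |-> f *m M), with M j k = k-th coordinate of the image of e_j. *)
Definition opmx (A : vec -> vec) : 'M[C]_n :=
  \matrix_(j < n, k < n) A (delta_mx ord0 j) ord0 k.

Definition frame_op (F : vfam) : 'M[C]_n :=
  opmx (fun f => synthesis F (analysis F f)).
Definition canonical_dual (F : vfam) : vfam :=
  fun i => F i *m invmx (frame_op F).

Definition frob (M : 'M[C]_n) : R :=
  Num.sqrt (\sum_(j < n) \sum_(k < n) (cabs (M j k)) ^+ 2).

Definition diagS (S : {set 'I_N}) : 'M[C]_N :=
  \matrix_(i < N, j < N) (if (i == j) && (i \in S) then 1 else 0).

Definition erasure_op (F G : vfam) (S : {set 'I_N}) : 'M[C]_n :=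
  opmx (fun f => synthesis G (analysis F f *m diagS S)).

(* AE^{(m),p}_F(F, G); D ranges over D^{(m)}, i.e. over subsets S with #|S| = m *)
Definition AE (m : nat) (p : R) (F G : vfam) : R :=
  ((('C(N, m))%:R)^-1 *
     \sum_(S : {set 'I_N} | #|S| == m) (frob (erasure_op F G S)) `^ p) `^ (p^-1).

(* zeta^{(k),p}(F) : k-erasure Frobenius-optimal duals, defined recursively;
   zeta_opt 0 is the set of all duals, so that zeta_opt 1 is the set of duals
   attaining AE^{(1),p}(F) = inf over duals, and for k > 1 zeta_opt k is the
   set of G in zeta_opt (k-1) attaining inf over zeta_opt (k-1) of AE^{(k),p}. *)
Fixpoint zeta_opt (p : R) (F : vfam) (k : nat) : set vfam :=
  match k with
  | 0 => [set G | is_dual F G]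
  | k'.+1 =>
      [set G | zeta_opt p F k' G /\
               AE k'.+1 p F G = inf [set AE k'.+1 p F G' | G' in zeta_opt p F k']]
  end.

End Frames.

(* Main.v *)
Require Import Defs.
From HB Require Import structures.
From mathcomp Require Import all_boot all_order all_algebra.
From mathcomp Require Import classical_sets boolp reals exp.
From mathcomp Require Import complex.
From mathcomp Require Import ring lra.
Import Order.TTheory GRing.Theory Num.Theory.
Local Open Scope ring_scope.
Local Open Scope classical_set_scope.
Set Implicit Arguments. Unset Strict Implicit. Unset Printing Implicit Defensive.

Section S.
Variables (R : realType) (n N : nat).
Local Notation C := (R[i]).
Local Notation vec := (vec R n).
Local Notation inner := (@inner R n).
Local Notation normsq := (@normsq R n).

Lemma cabsE (z : C) : ((cabs z ^+ 2)%:C)%C = z * conjc z.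
Proof.
case: z => a b; rewrite /cabs /= sqr_sqrtr ?addr_ge0 ?sqr_ge0 //.
rewrite /conjc /GRing.mul /=. congr Complex; ring.
Qed.

Lemma cabs_ge0 (z : C) : 0 <= cabs z. Proof. exact: sqrtr_ge0. Qed.

Lemma cabs2 (z : C) : cabs z ^+ 2 = complex.Re z ^+ 2 + complex.Im z ^+ 2.
Proof. by rewrite /cabs sqr_sqrtr ?addr_ge0 ?sqr_ge0. Qed.

Lemma cabsM2 (x y : C) : cabs (x * y) ^+ 2 = cabs x ^+ 2 * cabs y ^+ 2.
Proof.
rewrite !cabs2; case: x => a b; case: y => c d.
rewrite -[complex.Re _]/(a * c - b * d) -[complex.Im (_ * _)]/(a * d + b * c) /=.
ring.
Qed.

Lemma cabsJ2 (x : C) : cabs (conjc x) ^+ 2 = cabs x ^+ 2.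
Proof. rewrite !cabs2; case: x => a b /=; ring. Qed.

Lemma cabs0 (x : C) : cabs x = 0 -> x = 0.
Proof.
case: x => a b; rewrite /cabs /= => /eqP; rewrite sqrtr_eq0 => h.
have ha : a ^+ 2 = 0 by apply/eqP; rewrite eq_le sqr_ge0 andbT; apply: le_trans h; rewrite lerDl sqr_ge0.
have hb : b ^+ 2 = 0 by apply/eqP; rewrite eq_le sqr_ge0 andbT; apply: le_trans h; rewrite lerDr sqr_ge0.
by move/eqP: ha; rewrite sqrf_eq0 => /eqP->; move/eqP: hb; rewrite sqrf_eq0 => /eqP->.
Qed.

Lemma normsqC (v : vec) : ((normsq v)%:C)%C = inner v v.
Proof. rewrite /normsq /Defs.inner rmorph_sum; apply: eq_bigr => k _; exact: cabsE. Qed.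

Lemma normsq_ge0 v : 0 <= normsq v.
Proof. by apply: sumr_ge0 => k _; rewrite sqr_ge0. Qed.

Lemma normsq0 v : normsq v = 0 -> v = 0.
Proof.
move/eqP; rewrite psumr_eq0 => [/allP h|k _]; last exact: sqr_ge0.
apply/rowP => k; rewrite mxE; apply: cabs0.
by have /(_ (mem_index_enum k))/implyP/(_ isT) := h k; rewrite sqrf_eq0 => /eqP.
Qed.

Lemma innerDl (f g h : vec) : inner (f + g) h = inner f h + inner g h.
Proof. by rewrite /Defs.inner -big_split; apply: eq_bigr => k _; rewrite mxE mulrDl. Qed.
Lemma innerZl a (f h : vec) : inner (a *: f) h = a * inner f h.
Proof. by rewrite /Defs.inner mulr_sumr; apply: eq_bigr => k _; rewrite mxE mulrA. Qed.
Lemma innerC (f g : vec) : inner g f = conjc (inner f g).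
Proof. by rewrite /Defs.inner rmorph_sum; apply: eq_bigr => k _; rewrite rmorphM /= conjcK mulrC. Qed.
Lemma innerDr (f g h : vec) : inner h (f + g) = inner h f + inner h g.
Proof. by rewrite innerC innerDl rmorphD /= -!innerC. Qed.
Lemma innerZr a (f h : vec) : inner h (a *: f) = conjc a * inner h f.
Proof. by rewrite innerC innerZl rmorphM /= -innerC. Qed.
Lemma innerNl (f h : vec) : inner (- f) h = - inner f h.
Proof. by rewrite -scaleN1r innerZl mulN1r. Qed.
Lemma innerNr (f h : vec) : inner h (- f) = - inner h f.
Proof. by rewrite -scaleN1r innerZr rmorphN rmorph1 mulN1r. Qed.

Lemma inner_deltal j (f : vec) : inner (delta_mx ord0 j) f = conjc (f ord0 j).
Proof.
rewrite /Defs.inner (bigD1 j) //= big1 ?addr0 => [|k kj]; first by rewrite mxE !eqxx mul1r.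
by rewrite mxE (negbTE kj) andbF mul0r.
Qed.
Lemma inner_deltar j (f : vec) : inner f (delta_mx ord0 j) = f ord0 j.
Proof. by rewrite innerC inner_deltal conjcK. Qed.

Local Notation vfam := (vfam R n N).

Lemma synthE (G : vfam) c k : synthesis G c ord0 k = \sum_i c ord0 i * G i ord0 k.
Proof. by rewrite /synthesis summxE; apply: eq_bigr => i _; rewrite mxE. Qed.

Lemma dualE (F G : vfam) : is_dual F G ->
  forall f k, \sum_i inner f (F i) * G i ord0 k = f ord0 k.
Proof.
move=> hd f k; rewrite -{2}(hd f) synthE; apply: eq_bigr => i _; by rewrite mxE.
Qed.

Lemma trace_dual (F G : vfam) : is_dual F G -> \sum_i inner (G i) (F i) = n%:R.
Proof.
move=> hd.
transitivity (\sum_(j < n) \sum_i inner (delta_mx ord0 j) (F i) * G i ord0 j).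
  rewrite exchange_big; apply: eq_bigr => i _.
  under [RHS]eq_bigr => j _ do rewrite inner_deltal mulrC.
  by [].
rewrite (eq_bigr (fun _ => 1)) ?sumr_const ?card_ord // => j _.
by rewrite dualE // mxE !eqxx.
Qed.

Lemma parsevalC (F : vfam) : is_parseval F ->
  forall f, \sum_i inner f (F i) * inner (F i) f = inner f f.
Proof.
move=> [_ hp] f; rewrite -normsqC -hp rmorph_sum; apply: eq_bigr => i _.
by rewrite [inner (F i) f]innerC; symmetry; exact: cabsE.
Qed.

Definition Pf (F : vfam) (f g : vec) := \sum_i inner f (F i) * inner (F i) g.

Lemma PDl F f g h : Pf F (f + g) h = Pf F f h + Pf F g h.
Proof. by rewrite /Pf -big_split; apply: eq_bigr => i _; rewrite innerDl mulrDl. Qed.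
Lemma PDr F f g h : Pf F h (f + g) = Pf F h f + Pf F h g.
Proof. by rewrite /Pf -big_split; apply: eq_bigr => i _; rewrite innerDr mulrDr. Qed.
Lemma PZl F a f h : Pf F (a *: f) h = a * Pf F f h.
Proof. by rewrite /Pf mulr_sumr; apply: eq_bigr => i _; rewrite innerZl mulrA. Qed.
Lemma PZr F a f h : Pf F h (a *: f) = conjc a * Pf F h f.
Proof. by rewrite /Pf mulr_sumr; apply: eq_bigr => i _; rewrite innerZr mulrCA. Qed.

Lemma polar F : (forall f, Pf F f f = inner f f) -> forall f g, Pf F f g = inner f g.
Proof.
move=> H f g.
have h1 : (Pf F f g - inner f g) + (Pf F g f - inner g f) = 0.
  rewrite -(subrr (Pf F (f + g) (f + g))) {2}H.
  rewrite PDl !PDr innerDl !innerDr !H; ring.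
pose a : C := Complex 0 1.
have ca : conjc a = - a by rewrite /a /conjc; congr Complex; rewrite oppr0.
have h2 : conjc a * (Pf F f g - inner f g) + a * (Pf F g f - inner g f) = 0.
  rewrite -(subrr (Pf F (f + a *: g) (f + a *: g))) {2}H.
  rewrite PDl !PDr !PZl !PZr innerDl !innerDr !innerZl !innerZr !H ca; ring.
rewrite ca in h2.
have : 2%:R * a * (Pf F f g - inner f g) = 0.
  transitivity (a * ((Pf F f g - inner f g) + (Pf F g f - inner g f)) -
     (- a * (Pf F f g - inner f g) + a * (Pf F g f - inner g f))); first ring.
  by rewrite h1 h2 mulr0 subrr.
move/eqP; rewrite !mulf_eq0 pnatr_eq0 /= => /orP[|/eqP/subr0_eq //].
by rewrite /a eq_complex /= oner_eq0 andbF.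
Qed.

Lemma self_dual (F : vfam) : is_parseval F -> is_dual F F.
Proof.
move=> hp f; apply/rowP => k; rewrite synthE.
have := polar (parsevalC hp) f (delta_mx ord0 k).
rewrite inner_deltar => <-; apply: eq_bigr => i _; by rewrite mxE inner_deltar.
Qed.

Lemma canonical_self (F : vfam) : is_parseval F -> canonical_dual F = F.
Proof.
move=> hp; have hd := self_dual hp; rewrite /canonical_dual.
have -> : frame_op F = 1%:M.
  apply/matrixP => j k; rewrite /frame_op /opmx !mxE hd mxE eqxx /=.
  by rewrite eq_sym.
by apply: funext => i; rewrite invmx1 mulmx1.
Qed.

Lemma erasure_single (F G : vfam) i j k :
  erasure_op F G [set i]%SET j k = conjc (F i ord0 j) * G i ord0 k.
Proof.
rewrite /erasure_op /opmx mxE synthE (bigD1 i) //= big1 ?addr0.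
  rewrite mxE (bigD1 i) //= big1 ?addr0.
    by rewrite !mxE eqxx set11 mulr1 inner_deltal.
  by move=> l li; rewrite !mxE (negbTE li) andFb mulr0.
move=> l li; rewrite mxE big1 ?mul0r // => m _; rewrite !mxE inE.
by case: eqP => [->|]; rewrite ?(negbTE li) ?andbF /= ?mulr0.
Qed.

Lemma frob_single (F G : vfam) i :
  frob (erasure_op F G [set i]%SET) = Num.sqrt (normsq (F i) * normsq (G i)).
Proof.
rewrite /frob /normsq mulr_suml; congr Num.sqrt; apply: eq_bigr => j _.
rewrite mulr_sumr; apply: eq_bigr => k _.
by rewrite erasure_single cabsM2 cabsJ2.
Qed.

Lemma sum_card1 (h : {set 'I_N} -> R) :
  \sum_(S : {set 'I_N} | #|S| == 1%N) h S = \sum_i h [set i]%SET.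
Proof.
have inj : {in predT &, injective (fun i : 'I_N => [set i]%SET)}.
  by move=> x y _ _; apply: set1_inj.
rewrite -(big_imset _ inj); apply: eq_bigl => S.
apply/cards1P/imsetP => [[x ->]|[x _ ->]]; by exists x.
Qed.

Lemma AE1E p (F G : vfam) :
  AE 1 p F G = ((N%:R)^-1 * \sum_i (normsq (F i) * normsq (G i)) `^ (2^-1 * p)) `^ p^-1.
Proof.
rewrite /AE bin1 sum_card1; congr (_ `^ _); congr (_ * _); apply: eq_bigr => i _.
rewrite frob_single -powR12_sqrt ?powRrM // ?mulr_ge0 // ?normsq_ge0 //.
Qed.

Lemma tangent (t r : R) : 0 <= t -> 1 < r -> 1 + r * (t - 1) <= t `^ r.
Proof.
move=> t0 r1; have r0 : 0 < r by apply: lt_trans r1.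
have r10 : 0 < r - 1 by rewrite subr_gt0.
have q0 : 0 < r / (r - 1) by rewrite divr_gt0.
have hpq : r^-1 + (r / (r - 1))^-1 = 1.
  by rewrite invf_div; field; rewrite ?gt_eqF.
have := conjugate_powR t0 ler01 r0 q0 hpq.
rewrite mulr1 powR1 /= => h.
have : r * t <= t `^ r + (r - 1).
  apply: (le_trans (ler_wpM2l (ltW r0) h)).
  rewrite invf_div /= le_eqVlt; apply/orP; left; apply/eqP; field; rewrite ?gt_eqF //.
move=> h2; lra.
Qed.

Lemma term_ineq (c x r : R) : 0 < c -> 0 <= x -> 1 < r ->
  (c * c) `^ r + (c * c) `^ r * r / c * (x - c) <= (c * x) `^ r.
Proof.
move=> c0 x0 r1.
have -> : c * x = (c * c) * (x / c) by field; rewrite gt_eqF.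
rewrite [X in _ <= X](powRM _ (mulr_ge0 (ltW c0) (ltW c0)) (divr_ge0 x0 (ltW c0))).
have K0 : 0 <= (c * c) `^ r by apply: powR_ge0.
have := tangent (divr_ge0 x0 (ltW c0)) r1 => h.
have -> : (c * c) `^ r + (c * c) `^ r * r / c * (x - c) =
    (c * c) `^ r * (1 + r * (x / c - 1)) by field; rewrite gt_eqF.
exact: ler_wpM2l.
Qed.

Lemma sum_term_ineq (c r : R) (x : 'I_N -> R) : 0 < c -> (forall i, 0 <= x i) -> 1 < r ->
  N%:R * (c * c) `^ r + (c * c) `^ r * r / c * \sum_i (x i - c) <= \sum_i (c * x i) `^ r.
Proof.
move=> c0 x0 r1.
have -> : N%:R * (c * c) `^ r + (c * c) `^ r * r / c * \sum_i (x i - c) =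
  \sum_i ((c * c) `^ r + (c * c) `^ r * r / c * (x i - c)).
  by rewrite [RHS]big_split /= sumr_const card_ord mulr_sumr mulr_natl.
by apply: ler_sum => i _; apply: term_ineq.
Qed.

Lemma trivial_vec (v w : vec) : n = 0%N -> v = w.
Proof. move=> n0; move: v w; rewrite n0 => v w; by rewrite (thinmx0 v) (thinmx0 w). Qed.

Lemma realC_sum (x : 'I_N -> R) : (((\sum_i x i)%:C)%C : C) = \sum_i ((x i)%:C)%C.
Proof. exact: rmorph_sum. Qed.
Lemma realC_B (a b : R) : (((a - b)%:C)%C : C) = (a%:C)%C - (b%:C)%C.
Proof. exact: rmorphB. Qed.

Lemma sum_diff (F G : vfam) : is_parseval F -> is_dual F G ->
  \sum_i normsq (G i - F i) = \sum_i (normsq (G i) - normsq (F i)).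
Proof.
move=> hp hd; apply: (@complexI R); rewrite !realC_sum.
under eq_bigr do rewrite normsqC.
under [RHS]eq_bigr do rewrite realC_B !normsqC.
have e1 := trace_dual hd.
have e2 := trace_dual (self_dual hp).
have e3 : \sum_i inner (F i) (G i) = n%:R.
  under eq_bigr do rewrite innerC.
  by rewrite -rmorph_sum e1 rmorph_nat.
under eq_bigr do rewrite innerDl !innerDr !innerNl !innerNr.
rewrite !big_split /= !sumrN e1 e2 e3; ring.
Qed.

Lemma realC_nat k : (((k%:R : R)%:C)%C : C) = k%:R.
Proof. exact: rmorph_nat. Qed.

Lemma key (F : vfam) p : is_UNTF F -> 2 < p -> forall G, is_dual F G ->
  AE 1 p F F <= AE 1 p F G /\ (AE 1 p F G <= AE 1 p F F -> G = F).
Proof.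
move=> [hp hu] p2 G hd.
case: (posnP n) => [n0|npos].
  by have -> : G = F by apply: funext => i; apply: trivial_vec.
have sF : \sum_i normsq (F i) = n%:R.
  apply: (@complexI R); rewrite realC_sum realC_nat.
  under eq_bigr do rewrite normsqC.
  exact: (trace_dual (self_dual hp)).
have hN : (0 < N)%N.
  case: (posnP N) => // N0; exfalso; move: sF.
  rewrite big1 => [/eqP|[m hm]]; last by exfalso; move: (hm); rewrite N0.
  by rewrite eq_sym pnatr_eq0 eqn0Ngt npos.
pose i0 := Ordinal hN; set c := normsq (F i0).
have hc : forall i, normsq (F i) = c.
  move=> i; have := hu i i0; rewrite /vnorm => /(congr1 (fun x => x ^+ 2)).
  by rewrite !sqr_sqrtr ?normsq_ge0.
have Nc : N%:R * c = n%:R.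
  by rewrite -sF; under eq_bigr do rewrite hc; rewrite sumr_const card_ord mulr_natl.
have c0 : 0 < c.
  rewrite lt_def normsq_ge0 andbT; apply/eqP => c0; move: Nc.
  by rewrite c0 mulr0 => /eqP; rewrite eq_sym pnatr_eq0 eqn0Ngt npos.
set r := 2^-1 * p.
have r1 : 1 < r by rewrite /r; lra.
have p0 : 0 < p by lra.
have Ninv : 0 < (N%:R : R)^-1 by rewrite invr_gt0 ltr0n.
set E := \sum_i normsq (G i - F i).
have E0 : 0 <= E by apply: sumr_ge0 => i _; apply: normsq_ge0.
have hE : E = \sum_i (normsq (G i) - c).
  by rewrite /E sum_diff //; apply: eq_bigr => i _; rewrite hc.
set K := (c * c) `^ r.
have K0 : 0 < K by apply: powR_gt0; rewrite mulr_gt0.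
have TF : \sum_i (normsq (F i) * normsq (F i)) `^ r = N%:R * K.
  by under eq_bigr do rewrite hc; rewrite sumr_const card_ord mulr_natl.
have TG : N%:R * K + K * r / c * E <= \sum_i (normsq (F i) * normsq (G i)) `^ r.
  under [X in _ <= X]eq_bigr do rewrite hc.
  rewrite hE; apply: sum_term_ineq => // i; exact: normsq_ge0.
have TGge0 : 0 <= \sum_i (normsq (F i) * normsq (G i)) `^ r.
  by apply: sumr_ge0 => i _; apply: powR_ge0.
have cr : 0 < K * r / c by rewrite divr_gt0 // mulr_gt0 //; lra.
rewrite !AE1E -/r TF; split.
  apply: ge0_ler_powR.
  - by rewrite invr_ge0 ltW.
  - rewrite nnegrE; apply: mulr_ge0; first by rewrite invr_ge0 ler0n.
    by apply: mulr_ge0; rewrite ?ler0n ?ltW.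
  - rewrite nnegrE; apply: mulr_ge0 => //; by rewrite invr_ge0 ler0n.
  rewrite ler_pM2l //; apply: le_trans TG; rewrite lerDl mulr_ge0 // ltW //.
move=> hle.
have : (N%:R)^-1 * \sum_i (normsq (F i) * normsq (G i)) `^ r <= (N%:R)^-1 * (N%:R * K).
  rewrite leNgt; apply/negP => lt; move: hle; rewrite leNgt => /negP; apply.
  apply: gt0_ltr_powR => //; first by rewrite invr_gt0.
  - rewrite nnegrE; apply: mulr_ge0; first by rewrite invr_ge0 ler0n.
    by apply: mulr_ge0; rewrite ?ler0n ?ltW.
  - rewrite nnegrE; apply: mulr_ge0 => //; by rewrite invr_ge0 ler0n.
rewrite ler_pM2l // => hT.
have : K * r / c * E <= 0 by lra.
rewrite pmulr_rle0 // => E0'.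
have : E = 0 by apply/eqP; rewrite eq_le E0 E0'.
move/eqP; rewrite /E psumr_eq0 => [/allP h|i _]; last exact: normsq_ge0.
apply: funext => i; apply/eqP; rewrite -subr_eq0; apply/eqP; apply: normsq0.
by have /(_ (mem_index_enum i))/implyP/(_ isT)/eqP := h i.
Qed.

End S.

Unset Implicit Arguments.
Set Strict Implicit.

Theorem proposition3p1 (R : realType) (n N : nat) (F : vfam R n N) (p : R) :
  is_UNTF F -> 2 < p ->
  zeta_opt p F 1 = [set canonical_dual F] /\
  (forall m : nat, (1 <= m <= N)%N -> zeta_opt p F m = [set canonical_dual F]).
Proof.
move=> hU p2; have hp := hU.1.
rewrite (canonical_self hp); have hF := self_dual hp.
have lb : forall k, has_lbound [set AE k p F G' | G' in zeta_opt p F k.-1].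
  by move=> k; exists 0 => _ [G' _ <-]; apply: powR_ge0.
have z1 : zeta_opt p F 1 = [set F].
  apply/seteqP; split => G.
    move=> [hd hinf]; have [_ huniq] := key hU p2 hd; apply: huniq.
    by rewrite hinf; apply: (ge_inf (lb 1%N)); exists F.
  move=> ->; split => //; apply/eqP; rewrite eq_le; apply/andP; split.
    apply: lb_le_inf; first by exists (AE 1 p F F), F.
    by move=> _ [G' hG' <-]; have [] := key hU p2 hG'.
  by apply: (ge_inf (lb 1%N)); exists F.
have zk : forall k, zeta_opt p F k.+1 = [set F].
  elim=> [//|k IH].
  rewrite [zeta_opt p F k.+2]/zeta_opt -/(zeta_opt p F k.+1) IH image_set1 inf1.
  by apply/seteqP; split => G; [case | move=> ->].
split=> // -[|m] // _; exact: zk.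
Qed.
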